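(* Let $q$ be a prime power and $n=q^4-1$. Let $x$ be the minimal representative of a cyclotomic coset $I_x$ of cardinality $2$ with $(q^4-1)/(q+1)<x<q^3+q$. Then $I_x$ is an SR-asymmetric coset. Furthermore, the interlude $[(q^4-1)/(q+1),\,q^3+q]_M=[(q-1,0,q-1,0),(0,1,0,1)]_M$ contains exactly $q^2-q$ minimal representatives of SR-asymmetric cosets.
   Context: Identify $\mathbb{Z}_n$ with $\{0,\ldots,n-1\}$, all arithmetic modulo $n$. The $q$-adic 4-tuple $(a_0,a_1,a_2,a_3)$ denotes $a_0+a_1q+a_2q^2+a_3q^3$ with $0\le a_i<q$. The cyclotomic coset of $x$ with respect to $q^2$ is $I_x=\{x,\,q^2x\bmod n\}$; its minimal representative is its least element. The (Hermitian) reciprocal coset of $I_x$ is $I_{n-qx}$. $I_x$ is symmetric if $I_{n-qx}=I_x$ and asymmetric otherwise; for an asymmetric pair with minimal representatives $x<y$, $I_x$ is FR-asymmetric and $I_y$ is SR-asymmetric. The interlude $[(q-1,0,q-1,0),(0,1,0,1)]_M$ is the set of integers $x$ with $(q-1,0,q-1,0)<x<(0,1,0,1)$ and $x<q^2x\bmod n$ (i.e. minimal representatives of cosets of cardinality $2$ in that range). *)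

(* Defs.v *)
From mathcomp Require Import all_boot.
Set Implicit Arguments. Unset Strict Implicit. Unset Printing Implicit Defensive.

Definition prime_power (q : nat) : Prop :=
  exists p k : nat, prime p /\ 0 < k /\ q = p ^ k.

Definition modn4 (q : nat) : nat := q ^ 4 - 1.

Definition qadic (q a0 a1 a2 a3 : nat) : nat :=
  a0 + a1 * q + a2 * q ^ 2 + a3 * q ^ 3.

(* cyclotomic coset I_x = {x, q^2 x mod n} (elements of Z_n as 0..n-1) *)
Definition coset (q x : nat) : seq nat :=
  undup [:: x %% modn4 q; (q ^ 2 * x) %% modn4 q].

Definition minrep (q x : nat) : nat :=
  minn (x %% modn4 q) ((q ^ 2 * x) %% modn4 q).

(* index of the reciprocal coset: I_{n - q x} (arithmetic mod n) *)
Definition recip (q x : nat) : nat :=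
  (modn4 q - (q * x) %% modn4 q) %% modn4 q.

Definition symmetric_coset (q x : nat) : bool :=
  perm_eq (coset q (recip q x)) (coset q x). (* equal as sets: both are duplicate-free *)

Definition SR_asymmetric (q x : nat) : bool :=
  ~~ symmetric_coset q x && (minrep q (recip q x) < minrep q x).

Definition in_interlude (q a b x : nat) : bool :=
  [&& a < x, x < b & x < (q ^ 2 * x) %% modn4 q].

(* Main.v *)
Require Import Defs.
From mathcomp Require Import all_boot zify.
Set Implicit Arguments. Unset Strict Implicit.
Lemma cnt (lo hi m : nat) : lo <= hi -> count (fun x => lo <= x < hi) (iota 0 m) = minn m hi - minn m lo.
Proof.
move=> le; elim: m => [|m IH]; first by rewrite /= !min0n.
rewrite -addn1 iotaD count_cat IH /= add0n addn0.
case: (leqP lo m) => H1; case: (ltnP m hi) => H2 /=; lia.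
Qed.
Lemma card_int (m lo hi : nat) (P : nat -> bool) : lo <= hi -> hi <= m ->
  (forall x, x < m -> P x = (lo <= x < hi)) ->
  #|[set x : 'I_m | P x]| = hi - lo.
Proof.
move=> le1 le2 HP.
rewrite -sum1_card.
rewrite (eq_bigl (fun i : 'I_m => lo <= i < hi)); last first.
  by move=> i; rewrite inE HP.
rewrite -(big_mkord (fun i => lo <= i < hi) (fun _ => 1)) /index_iota subn0 sum1_count cnt //.
lia.
Qed.

Lemma pows q : q^2 = q*q /\ q^3 = q*q^2 /\ q^4 = q*q^3.
Proof. by rewrite !expnS expn0 muln1. Qed.

Lemma modE n k r y : y = k*n + r -> r < n -> y %% n = r.
Proof. by move=> -> H; rewrite modnMDl modn_small. Qed.

Lemma caseB q x : 2 <= q -> q^3 <= x -> x < q^3+q -> (q^2*x) %% modn4 q < x.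
Proof.
move=> q2 H1 H2; have [P2 [P3 P4]] := pows q.
rewrite /modn4 (@modE _ q (q + (x - q^3) * q^2)); nia.
Qed.

Lemma caseA q x : 2 <= q -> q^3 - q^2 + q <= x -> x < q^3 -> x < (q^2*x) %% modn4 q.
Proof.
move=> q2 H1 H2; have [P2 [P3 P4]] := pows q.
rewrite /modn4 (@modE _ (q-1) (q - 1 + (x - (q^3 - q^2)) * q^2)); nia.
Qed.

Lemma a_eq q : 2 <= q -> modn4 q %/ (q+1) = q^3 - q^2 + q - 1.
Proof.
move=> q2; have [P2 [P3 P4]] := pows q.
have -> : modn4 q = (q^3 - q^2 + q - 1) * (q+1) by rewrite /modn4; nia.
by rewrite mulnK // addn1.
Qed.

Lemma minrep_mem q y : minrep q y \in coset q y.
Proof. rewrite /minrep /coset mem_undup !inE /minn; case: ifP => _; by rewrite eqxx ?orbT. Qed.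

Lemma minrep_le q y z : z \in coset q y -> minrep q y <= z.
Proof. by rewrite /minrep /coset mem_undup !inE => /orP [] /eqP ->; [apply: geq_minl | apply: geq_minr]. Qed.

Lemma SR_of q x : 2 <= q -> modn4 q %/ (q+1) < x -> x < q^3 -> x < (q^2*x) %% modn4 q -> SR_asymmetric q x.
Proof.
move=> q2 Ha Hb Hc; have [P2 [P3 P4]] := pows q.
have Hn : modn4 q < x * (q+1) by rewrite -ltn_divLR // addn1.
have Hxn : x < modn4 q by rewrite /modn4; nia.
have Hqx : q * x < modn4 q by rewrite /modn4; nia.
have Hmx : minrep q x = x.
  by rewrite /minrep (modn_small Hxn); apply/minn_idPl/ltnW.
have Hr : recip q x = modn4 q - q * x.
  rewrite /recip (modn_small Hqx) modn_small //; nia.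
have Hlt : minrep q (recip q x) < minrep q x.
  rewrite Hmx; apply: (@leq_ltn_trans (recip q x)).
    apply: minrep_le; rewrite /coset mem_undup inE Hr modn_small ?eqxx //; nia.
  rewrite Hr; nia.
rewrite /SR_asymmetric Hlt andbT; apply/negP => /perm_mem Hs.
have := minrep_mem q (recip q x); rewrite Hs => /minrep_le; rewrite leqNgt Hlt.
by [].
Qed.

Theorem mainTheorem14 (q : nat) (hq : prime_power q) :
  (forall x : nat,
      (modn4 q) %/ (q + 1) < x -> x < q ^ 3 + q ->
      x < (q ^ 2 * x) %% modn4 q ->
      SR_asymmetric q x)
  /\ (modn4 q) %/ (q + 1) = qadic q (q - 1) 0 (q - 1) 0
  /\ q ^ 3 + q = qadic q 0 1 0 1
  /\ #|[set x : 'I_(q ^ 3 + q) |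
         in_interlude q (qadic q (q - 1) 0 (q - 1) 0) (qadic q 0 1 0 1) x
         && SR_asymmetric q x]| = q ^ 2 - q.
Proof.
have q2 : 2 <= q.
  case: hq => p [k [pp [k0 ->]]]; have p2 := prime_gt1 pp.
  case: k k0 => [//|k] _; rewrite expnS; have := expn_gt0 p k; rewrite (prime_gt0 pp) /=; nia.
have [P2 [P3 P4]] := pows q.
have Ha := a_eq q2.
have H1 : forall x : nat,
      (modn4 q) %/ (q + 1) < x -> x < q ^ 3 + q ->
      x < (q ^ 2 * x) %% modn4 q -> SR_asymmetric q x.
  move=> x Hax Hxb Hc; case: (ltnP x (q^3)) => Hx; first exact: SR_of.
  by have := caseB q2 Hx Hxb; rewrite ltnNge (ltnW Hc).
have H2 : (modn4 q) %/ (q + 1) = qadic q (q - 1) 0 (q - 1) 0 by rewrite Ha /qadic; nia.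
have H3 : q ^ 3 + q = qadic q 0 1 0 1 by rewrite /qadic; nia.
split=> //; split=> //; split=> //.
rewrite -H2 -H3 (@card_int _ (q^3 - q^2 + q) (q^3) (fun x => in_interlude q (modn4 q %/ (q+1)) (q^3+q) x && SR_asymmetric q x)); [nia|nia|nia|].
move=> x Hx; rewrite /in_interlude Hx Ha.
case: (ltnP x (q^3 - q^2 + q)) => Hl.
  have -> : (q ^ 3 - q ^ 2 + q - 1 < x) = false by apply/negbTE; rewrite -leqNgt; nia.
  by [].
case: (ltnP x (q^3)) => Hu.
  have Hc := caseA q2 Hl Hu; rewrite Hc /=.
  have -> : (q ^ 3 - q ^ 2 + q - 1 < x) by nia.
  by rewrite /= (SR_of q2) // Ha; nia.
by rewrite [x < _ %% _]ltnNge (ltnW (caseB q2 Hu Hx)) !andbF.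
Qed.
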